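(* Let $S_\alpha(Y)=\#\{n\leqslant Y:\ p\mid n\Rightarrow p^\alpha\mid n\}$ (the number of natural numbers $n\leqslant Y$ such that every prime dividing $n$ divides it to exponent at least $\alpha$). Then uniformly for integers $\alpha\geqslant2$ and real $Y\geqslant 2$, $$S_\alpha(Y)\ll\alpha\kappa^\alpha Y^{1/\alpha}\log Y,$$ with an absolute implied constant, where $\kappa=\exp\left(\sum_p\frac{1}{p\log p}\right)$.
   Context: The sum defining $\kappa$ is over all primes. *)

(* Defs.v *)
From HB Require Import structures.
From mathcomp Require Import all_boot all_order all_algebra.
From mathcomp Require Import all_classical all_reals all_analysis.
Set Implicit Arguments. Unset Strict Implicit. Unset Printing Implicit Defensive.
Import Order.TTheory GRing.Theory Num.Theory.
Local Open Scope ring_scope.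

Definition alpha_full (alpha n : nat) : bool :=
  all (fun p => (p ^ alpha %| n)%N) (primes n).

Definition S_alpha {R : realType} (alpha : nat) (Y : R) : nat :=
  count (alpha_full alpha) (iota 1 (Num.truncn Y)).

Definition prime_term {R : realType} (k : nat) : R :=
  if prime k then (k%:R * ln (k%:R : R))^-1 else 0.

Definition kappa {R : realType} : R :=
  expR (limn (fun n : nat => \sum_(k < n) (@prime_term R k))).

(* Main.v *)
Require Import Defs.
From HB Require Import structures.
From mathcomp Require Import all_boot all_order all_algebra.
From mathcomp Require Import all_classical all_reals all_analysis.
From mathcomp Require Import ring lra.
Import Order.TTheory GRing.Theory Num.Theory numFieldNormedType.Exports.
Local Open Scope ring_scope.

Definition radn (n : nat) : nat := (\prod_(p <- primes n) p)%N.

Lemma coprime_prod_primes p s : prime p -> all prime s -> p \notin s ->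
  coprime p (\prod_(q <- s) q)%N.
Proof.
move=> pp; elim: s => [|q s IH] /=; first by rewrite big_nil coprimen1.
case/andP=> pq ps; rewrite in_cons negb_or => /andP[pnq pns].
rewrite big_cons coprimeMr IH // andbT prime_coprime // dvdn_prime2 //.
Qed.

Lemma prod_primes_dvd (s : seq nat) e m : uniq s -> all prime s ->
  all (fun p => p ^ e %| m)%N s -> ((\prod_(p <- s) p) ^ e %| m)%N.
Proof.
elim: s => [|p s IH] /=; first by rewrite big_nil exp1n dvd1n.
case/andP=> ps us /andP[pp ps'] /andP[dm dms].
rewrite big_cons expnMn Gauss_dvd ?dm ?IH //.
by apply: coprimeXl; apply: coprimeXr; apply: coprime_prod_primes.
Qed.



Lemma radn_gt0 n : (0 < radn n)%N.
Proof.
rewrite /radn big_seq; apply: (big_ind (fun x => 0 < x)%N) => //.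
  by move=> x y; rewrite muln_gt0 => -> ->.
move=> p; rewrite mem_primes => /and3P[pp _ _]; exact: prime_gt0.
Qed.

Lemma radn_dvd_full alpha n : (0 < n)%N -> alpha_full alpha n ->
  (radn n ^ alpha %| n)%N.
Proof.
move=> n0 af; apply: prod_primes_dvd; first exact: primes_uniq.
  by apply/allP=> p; rewrite mem_primes => /andP[].
exact: af.
Qed.

Lemma radn_dvd_radn r n : (0 < n)%N -> (r %| n)%N -> (radn r %| radn n)%N.
Proof.
move=> n0 rn; rewrite -[radn r]expn1; apply: prod_primes_dvd.
- exact: primes_uniq.
- by apply/allP=> p; rewrite mem_primes => /andP[].
apply/allP=> p; rewrite expn1 => pr.
have pn : p \in primes n.
  move: pr; rewrite !mem_primes => /and3P[-> r0 pr]; rewrite n0 /=.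
  exact: dvdn_trans rn.
by rewrite /radn (big_rem p pn) /= dvdn_mulr.
Qed.

Lemma count_dvd d M : (0 < d)%N -> count (dvdn d) (iota 1 M) = (M %/ d)%N.
Proof.
move=> d0; elim: M => [|M IH]; first by rewrite div0n.
by rewrite -[M.+1]addn1 iotaD count_cat IH /= addn0 add1n addn1 divnS // addnC.
Qed.

Lemma count_inj (T1 T2 : eqType) (f : T1 -> T2) (P : pred T1) (Q : pred T2)
  (s : seq T1) (t : seq T2) : uniq s ->
  {in [seq x <- s | P x] &, injective f} ->
  (forall x, x \in s -> P x -> (f x \in t) && Q (f x)) ->
  (count P s <= count Q t)%N.
Proof.
move=> us inj H; rewrite -!size_filter -(size_map f).
apply: uniq_leq_size; first by rewrite map_inj_in_uniq // filter_uniq.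
move=> y /mapP[x]; rewrite mem_filter => /andP[px xs] ->.
by rewrite mem_filter; case/andP: (H x xs px) => -> ->.
Qed.

Lemma count_partition (T : eqType) (P : pred T) (f : T -> nat) s t :
  uniq t -> (forall x, x \in s -> P x -> f x \in t) ->
  count P s = (\sum_(r <- t) count (fun x => P x && (f x == r)) s)%N.
Proof.
move=> ut; elim: s => [|x s IH] H /=.
  by rewrite big1.
rewrite big_split /= -IH; last by move=> y ys; apply: H; rewrite in_cons ys orbT.
congr (_ + _)%N.
case px: (P x) => /=; last by rewrite big1.
have xt : f x \in t by apply: H => //; rewrite in_cons eqxx.
rewrite (bigD1_seq (f x)) //= eqxx big1 ?addn0 // => r /negbTE.
by rewrite eq_sym => ->.
Qed.

Lemma logn_lt p r : (0 < r)%N -> (logn p r < r.+1)%N.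
Proof.
move=> r0; case: (ltnP 1 p) => p1.
  rewrite ltnS; apply: leq_trans (ltnW (ltn_expl _ p1)) _.
  exact: dvdn_leq (pfactor_dvdnn _ _).
have : (logn p r == 0)%N.
  by rewrite -leqn0 leqNgt logn_gt0 mem_primes; case: p p1 => [|[]].
by move/eqP->.
Qed.

Lemma binom_ub N : ('C(N.*2, N) <= 2 ^ N.*2)%N.
Proof.
have -> : (2 = 1 + 1)%N by [].
have hN : (N < N.*2.+1)%N by rewrite ltnS -addnn leq_addr.
by rewrite expnDn (bigD1 (Ordinal hN)) //= !exp1n !muln1 leq_addr.
Qed.

Lemma prime_ndvd_fact p N : prime p -> (N < p)%N -> ~~ (p %| N`!)%N.
Proof.
move=> pp; elim: N => [|N IH] lt.
  by rewrite fact0 dvdn1; case: p pp {lt} => [|[]].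
rewrite factS Euclid_dvdM // negb_or IH ?(ltnW lt) // andbT.
apply/negP => /dvdn_leq => /(_ isT); rewrite leqNgt lt.
by [].
Qed.

Lemma prime_dvd_binom N p : prime p -> (N < p <= N.*2)%N -> (p %| 'C(N.*2, N))%N.
Proof.
move=> pp /andP[lo hi].
have h2 : (N <= N.*2)%N by rewrite -addnn leq_addr.
have := bin_fact h2; rewrite -addnn addnK addnn => E.
have : (p %| (N.*2)`!)%N by apply: dvdn_fact; rewrite prime_gt0.
rewrite -E Gauss_dvdl //.
by rewrite coprimeMr prime_coprime // prime_ndvd_fact.
Qed.

Lemma block_dvd N : (\prod_(p <- [seq p <- iota N.+1 N | prime p]) p %| 'C(N.*2, N))%N.
Proof.
rewrite -[X in (X %| _)%N]expn1; apply: prod_primes_dvd.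
- by rewrite filter_uniq // iota_uniq.
- by apply/allP => p; rewrite mem_filter => /andP[].
apply/allP => p; rewrite mem_filter mem_iota expn1 => /andP[pp /andP[lo hi]].
apply: prime_dvd_binom => //; rewrite lo /= -addnn.
by rewrite -ltnS (leq_trans hi) // addSn.
Qed.

Section Cheb.
Variable R : realType.

Lemma ln_prod_nat (s : seq nat) : all (fun p => 0 < p)%N s ->
  ln ((\prod_(p <- s) p)%:R : R) = \sum_(p <- s) ln (p%:R).
Proof.
elim: s => [|p s IH] /=; first by rewrite big_nil ln1 big_nil.
case/andP => p0 ps; rewrite !big_cons natrM lnM ?IH // posrE ltr0n //.
rewrite big_seq; apply: (big_ind (fun x => 0 < x)%N) => // [x y|x xs].
  by rewrite muln_gt0 => -> ->.
exact: (allP ps).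
Qed.

Lemma ln2_ge : 2^-1 <= ln (2 : R).
Proof.
have h : ln (1 + (- 2^-1)) <= - (2^-1 : R) by apply: le_ln1Dx; rewrite ltrNl opprK; lra.
have e : 1 + - 2^-1 = (2 : R)^-1 by lra.
move: h; rewrite e lnV ?posrE //; lra.
Qed.

Lemma ln2_gt0 : 0 < ln (2 : R).
Proof. apply: lt_le_trans ln2_ge; lra. Qed.

Lemma sum_ln_block N :
  \sum_(p <- [seq p <- iota N.+1 N | prime p]) ln (p%:R : R) <= (N.*2)%:R * ln 2.
Proof.
rewrite -ln_prod_nat; last by apply/allP => p; rewrite mem_filter => /andP[/prime_gt0].
have P0 : (0 < \prod_(p <- [seq p <- iota N.+1 N | prime p]) p)%N.
  rewrite big_seq; apply: (big_ind (fun x => 0 < x)%N) => // [x y|x].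
    by rewrite muln_gt0 => -> ->.
  by rewrite mem_filter => /andP[/prime_gt0].
have C0 : (0 < 'C(N.*2, N))%N by rewrite bin_gt0 -addnn leq_addr.
have le1 := leq_trans (dvdn_leq C0 (block_dvd N)) (binom_ub N).
rewrite (@le_trans _ _ (ln ((2 ^ N.*2)%:R : R))) //.
  rewrite ler_ln ?posrE ?ltr0n ?expn_gt0 // ler_nat //.
  by rewrite natrX lnXn // mulr_natl.
Qed.

Lemma pt_le p N : prime p -> (1 < N)%N -> (N < p)%N ->
  prime_term p <= ln (p%:R : R) / (N%:R * ln (N%:R) ^+ 2).
Proof.
move=> pp N1 Np; rewrite /prime_term pp.
have lnN : 0 < ln (N%:R : R) by apply: ln_gt0; rewrite ltr1n.
have N0n : (0 < N)%N by exact: ltnW N1.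
have p0n : (0 < p)%N by exact: prime_gt0.
have lnNp : ln (N%:R : R) <= ln (p%:R) by rewrite ler_ln ?posrE ?ltr0n ?ler_nat ?(ltnW Np).
have lnp : 0 < ln (p%:R : R) by apply: lt_le_trans lnNp.
have N0 : 0 < (N%:R : R) by rewrite ltr0n.
have Np' : (N%:R : R) <= p%:R by rewrite ler_nat ltnW.
have p0 : 0 < (p%:R : R) by rewrite ltr0n.
have -> : (p%:R * ln (p%:R : R))^-1 = ln (p%:R) / (p%:R * ln (p%:R) ^+ 2).
  by field; rewrite ?gt_eqF.
rewrite ler_pM2l // lef_pV2 ?posrE ?mulr_gt0 ?exprn_gt0 //.
rewrite !expr2 !mulrA; apply: ler_pM; [apply: mulr_ge0; lra | lra | apply: ler_pM; lra | lra].
Qed.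

Lemma pt_ge0 k : 0 <= prime_term k :> R.
Proof.
rewrite /prime_term; case: ifP => // pk.
rewrite invr_ge0 mulr_ge0 // ln_ge0 // ler1n prime_gt0 //.
Qed.

Lemma block_sum N : (1 < N)%N ->
  \sum_(p <- iota N.+1 N) prime_term p <= 2 * ln (2 : R) / ln (N%:R) ^+ 2.
Proof.
move=> N1.
have lnN : 0 < ln (N%:R : R) by apply: ln_gt0; rewrite ltr1n.
have N0 : 0 < (N%:R : R) by rewrite ltr0n ltnW.
rewrite (bigID prime) /= [X in _ + X]big1 ?addr0; last first.
  by move=> p /negbTE pp; rewrite /prime_term pp.
rewrite big_seq_cond.
apply: le_trans (_ : _ <= \sum_(p <- iota N.+1 N | (p \in iota N.+1 N) && prime p)
                          ln (p%:R : R) / (N%:R * ln (N%:R) ^+ 2)) _.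
  apply: ler_sum => p /andP[]; rewrite mem_iota => /andP[lo _] pp.
  exact: pt_le.
rewrite -big_seq_cond -big_filter -mulr_suml.
apply: le_trans (ler_wpM2r _ (sum_ln_block N)) _.
  by rewrite invr_ge0 mulr_ge0 ?exprn_ge0 // ltW.
rewrite -addnn natrD -mulr2n -mulr_natl.
rewrite le_eqVlt; apply/orP; left; apply/eqP; field.
by rewrite mulr1 !gt_eqF.
Qed.

Definition u (n : nat) : R := \sum_(k < n) prime_term k.

Lemma u_split N : u (N.*2.+1) = u N.+1 + \sum_(p <- iota N.+1 N) prime_term p.
Proof.
rewrite /u -!(big_mkord xpredT (fun k => prime_term k)).
rewrite (@big_cat_nat _ _ _ N.+1) //=; last by rewrite ltnS -addnn leq_addr.
by rewrite /index_iota subSS -addnn addnK.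
Qed.

Lemma u_incr : {homo u : n m / (n <= m)%N >-> n <= m}.
Proof.
apply/nondecreasing_seqP => n; rewrite /u big_ord_recr /= lerDl; exact: pt_ge0.
Qed.

Lemma u_bound K : (0 < K)%N -> u (2 ^ K).+1 <= 9 - 8 / K%:R.
Proof.
elim: K => [//|K IH] _.
case: K IH => [|K] IH.
  rewrite /u !big_ord_recr big_ord0 /= /prime_term /=.
  have := ln2_ge; have := ln2_gt0.
  set l := ln _ => l0 lge.
  have : (2%:R * l)^-1 <= 1.
    rewrite invf_le1 ?mulr_gt0 //; lra.
  lra.
have {}IH := IH isT.
rewrite expnS mul2n u_split.
have N1 : (1 < 2 ^ K.+1)%N by apply: leq_trans (ltn_expl K.+1 (isT : (1 < 2)%N)).
have := lerD IH (block_sum _ N1).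
move=> H; apply: (le_trans H); clear H.
rewrite natrX lnXn // -[(ln _) *+ _]mulr_natr.
have := ln2_ge; have := ln2_gt0.
set l := ln _ => l0 lge.
set k := (K.+1)%:R.
have k1 : 1 <= k by rewrite /k ler1n.
have -> : (K.+2)%:R = k + 1 by rewrite /k -natr1.
clearbody k.
have e : 2 * l / (l * k) ^+ 2 = 2 / (k ^+ 2 * l) by field; rewrite gt_eqF //; lra.
rewrite e.
have k0 : k != 0 by rewrite gt_eqF //; lra.
have : 2 / (k ^+ 2 * l) <= 4 / k ^+ 2.
  rewrite ler_pdivrMr ?mulr_gt0 ?exprn_gt0 //; try lra.
  have -> : 4 / k ^+ 2 * (k ^+ 2 * l) = 4 * l by field.
  lra.
have : 4 / k ^+ 2 <= 8 / k - 8 / (k + 1).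
  have -> : 8 / k - 8 / (k + 1) = 8 / (k * (k + 1)).
    by field; rewrite k0 andbT gt_eqF //; lra.
  rewrite ler_pdivrMr ?exprn_gt0 //; try lra.
  have -> : 8 / (k * (k + 1)) * k ^+ 2 = 8 * k / (k + 1).
    by field; rewrite k0 andbT gt_eqF //; lra.
  rewrite ler_pdivlMr; lra.
lra.
Qed.

Lemma u_le9 n : u n <= 9.
Proof.
have h1 : (n <= (2 ^ n.+1).+1)%N.
  apply: leq_trans (ltnW (ltn_expl n (isT : (1 < 2)%N))) _.
  by rewrite leqW // leq_exp2l.
apply: (le_trans (u_incr _ _ h1)).
apply: (le_trans (u_bound _ (isT : (0 < n.+1)%N))).
by rewrite lerBlDr lerDl divr_ge0.
Qed.

Lemma u_cvg : cvgn u.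
Proof.
have ub : has_ubound (range u) by exists 9 => _ [n _ <-]; exact: u_le9.
have h := nondecreasing_cvgn u_incr ub.
exact: (cvgP _ h).
Qed.

Lemma u_le_lim n : u n <= limn u.
Proof. exact: nondecreasing_cvgn_le u_incr u_cvg n. Qed.

End Cheb.

Section Expand.
Variable R : realType.

Lemma sum_uniq_le (I : finType) (s : seq I) (F : I -> R) :
  uniq s -> (forall i, 0 <= F i) -> \sum_(i <- s) F i <= \sum_i F i.
Proof.
move=> us F0; rewrite big_uniq // [X in _ <= X](bigID (mem s)) /= lerDl.
exact: sumr_ge0.
Qed.

Lemma primes_le p r : p \in primes r -> (p <= r)%N.
Proof. by rewrite mem_primes => /and3P[_ r0 /dvdn_leq]; apply. Qed.

Lemma expand_prod N (H : nat -> nat -> R) : (forall p b, 0 <= H p b) ->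
  \sum_(r <- iota 1 N) \prod_(p < N.+1) H p (logn p r)
  <= \prod_(p < N.+1) \sum_(b < N.+1) H p b.
Proof.
move=> H0.
rewrite (bigA_distr_bigA (fun (p b : 'I_N.+1) => H p b)) /=.
pose phi (r : nat) : {ffun 'I_N.+1 -> 'I_N.+1} := [ffun p : 'I_N.+1 => inord (logn p r)].
have E : forall r, r \in iota 1 N ->
    \prod_(p < N.+1) H p (logn p r) = \prod_(p < N.+1) H p (phi r p).
  move=> r; rewrite mem_iota => /andP[r1 rN]; apply: eq_bigr => p _.
  rewrite ffunE inordK //; apply: leq_trans (logn_lt _ _ r1) _; by rewrite -(add1n N).
rewrite big_seq (eq_bigr _ E) -big_seq -(big_map phi xpredT (fun f => \prod_(p < N.+1) H p (f p))).
apply: sum_uniq_le; last by move=> f; apply: prodr_ge0.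
rewrite map_inj_in_uniq ?iota_uniq // => r r'.
rewrite !mem_iota => /andP[r1 rN] /andP[r1' rN'] eqf.
apply: eqn_from_log => // p.
case: (ltnP p N.+1) => pN.
  have := congr1 (fun f : {ffun 'I_N.+1 -> 'I_N.+1} => nat_of_ord (f (Ordinal pN))) eqf.
  rewrite /= !ffunE /= !inordK //.
    apply: leq_trans (logn_lt _ _ r1') _; by rewrite -(add1n N).
  apply: leq_trans (logn_lt _ _ r1) _; by rewrite -(add1n N).
have z : forall x, (0 < x)%N -> (x < 1 + N)%N -> logn p x = 0%N.
  move=> x x0 xN; apply/eqP; rewrite -leqn0 leqNgt logn_gt0.
  apply/negP => /primes_le xp.
  by have := leq_trans (leq_ltn_trans xp xN) pN; rewrite ltnn.
by rewrite !z.
Qed.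

End Expand.

Section Factor.
Variable R : realType.

Definition Hf (a : R) (p b : nat) : R :=
  if b == 0%N then 1 else if prime p then ((p%:R `^ a) ^+ b)^-1 / p%:R else 0.

Lemma Hf_ge0 a p b : 0 <= Hf a p b.
Proof.
rewrite /Hf; case: eqP => // _; case: prime => //.
Qed.

Lemma geo_eq (q : R) n : q != 1 ->
  \sum_(b < n) q ^+ b.+1 = (q - q ^+ n.+1) / (1 - q).
Proof.
move=> q1; have q1' : 1 - q != 0 by rewrite subr_eq0 eq_sym.
elim: n => [|n IH]; first by rewrite big_ord0 expr1 subrr mul0r.
rewrite big_ord_recr /= IH; apply: (mulIf q1'); rewrite mulrDl !mulfVK //.
rewrite !exprS; ring.
Qed.

Lemma geo (q : R) n : 0 <= q < 1 -> \sum_(b < n) q ^+ b.+1 <= q / (1 - q).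
Proof.
case/andP=> q0 q1; rewrite geo_eq ?lt_eqF //.
rewrite ler_pM2r ?invr_gt0 ?subr_gt0 // gerBl exprn_ge0 //.
Qed.

Lemma factor_bound alpha N p : (0 < alpha)%N ->
  \sum_(b < N.+1) Hf (alpha%:R^-1) p b <= expR (alpha%:R * prime_term p).
Proof.
move=> a0; set a : R := alpha%:R^-1.
rewrite big_ord_recl /= /Hf /= /prime_term.
have al : 0 < (alpha%:R : R) by rewrite ltr0n.
have a0' : 0 < a by rewrite invr_gt0.
case pp: (prime p); last first.
  by rewrite big1 ?addr0 ?mulr0 ?expR0.
have := expR_ge1Dx (alpha%:R / (p%:R * ln (p%:R : R)) : R); apply: le_trans.
rewrite lerD2l.
have p1 : 1 < (p%:R : R) by rewrite ltr1n prime_gt1.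
have lp : 0 < ln (p%:R : R) by apply: ln_gt0.
set Q := p%:R `^ a.
have QE : Q = expR (a * ln p%:R) by rewrite /Q /powR gt_eqF //; lra.
have Q1 : 1 + a * ln p%:R <= Q by rewrite QE expR_ge1Dx.
have aln : 0 < a * ln (p%:R : R) by rewrite mulr_gt0.
have Q0 : 0 < Q by lra.
have -> : \sum_(i < N) ((Q ^+ (bump 0 i))^-1 / p%:R)
    = (\sum_(i < N) (Q^-1) ^+ i.+1) / p%:R.
  by rewrite mulr_suml; apply: eq_bigr => i _; rewrite exprVn.
apply: (le_trans (ler_wpM2r _ (geo (Q^-1) N _))).
- by rewrite invr_ge0 ler0n.
- rewrite invr_ge0 ltW //= invf_lt1 //; lra.
have -> : Q^-1 / (1 - Q^-1) = (Q - 1)^-1.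
  by field; rewrite ?gt_eqF //; try lra; rewrite subr_eq0 gt_eqF //; lra.
have h : (Q - 1)^-1 <= (a * ln (p%:R : R))^-1.
  by rewrite lef_pV2 ?posrE //; lra.
have e : (a * ln (p%:R : R))^-1 = alpha%:R / ln p%:R.
  by rewrite invfM /a invrK mulrC.
have e2 : alpha%:R / (p%:R * ln (p%:R : R)) = (alpha%:R / ln p%:R) / p%:R.
  by field; rewrite !gt_eqF //; lra.
rewrite e2 ler_pM2r ?invr_gt0; last lra.
by rewrite -e.
Qed.

End Factor.


Section Main.
Variable R : realType.

Definition rpart (alpha n : nat) : nat := divn n (expn (radn n) alpha).

Lemma rpartE alpha n : (0 < n)%N -> alpha_full alpha n ->
  n = (radn n ^ alpha * rpart alpha n)%N.
Proof. by move=> n0 af; rewrite /rpart mulnC divnK // radn_dvd_full. Qed.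

Lemma powR_root (x : R) n : 0 <= x -> (0 < n)%N -> (x ^+ n) `^ (n%:R^-1) = x.
Proof.
move=> x0 n0; rewrite -powR_mulrn // -powRrM mulfV ?powRr1 //.
by rewrite pnatr_eq0 -lt0n.
Qed.

Lemma fiber_count alpha N r : (0 < r)%N -> (0 < alpha)%N ->
  ((count (fun n => alpha_full alpha n && (rpart alpha n == r)) (iota 1 N))%:R : R)
  <= ((N%:R / r%:R) `^ (alpha%:R^-1)) / (radn r)%:R.
Proof.
move=> r0 a0.
set a : R := alpha%:R^-1.
have a0' : 0 <= a by rewrite invr_ge0 ler0n.
set W := (N%:R / r%:R) `^ a.
have W0 : 0 <= W by exact: powR_ge0.
set M := Num.truncn W.
have d0 := radn_gt0 r.
apply: (@le_trans _ _ ((count (dvdn (radn r)) (iota 1 M))%:R)).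
  rewrite ler_nat; apply: (@count_inj _ _ radn); first exact: iota_uniq.
    move=> x y; rewrite !mem_filter !mem_iota.
    case/andP=> /andP[afx /eqP rx] /andP[x0 _] /andP[/andP[afy /eqP ry] /andP[y0 _]] e.
    by rewrite (rpartE _ _ x0 afx) (rpartE _ _ y0 afy) rx ry e.
  move=> x; rewrite mem_iota => /andP[x0 xN] /andP[afx /eqP rx].
  have ex := rpartE _ _ x0 afx; rewrite rx in ex.
  rewrite mem_iota radn_gt0 /= add1n ltnS truncn_ge_nat //.
  rewrite radn_dvd_radn //; last by rewrite ex dvdn_mull.
  rewrite andbT /W -(powR_root _ _ (ler0n _ (radn x)) a0).
  apply: ge0_ler_powR => //; rewrite ?nnegrE ?exprn_ge0 ?divr_ge0 //.
  rewrite ler_pdivlMr ?ltr0n // -natrX -natrM ler_nat -ex.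
  by rewrite -ltnS -add1n.
rewrite count_dvd //.
rewrite ler_pdivlMr ?ltr0n //.
apply: (@le_trans _ _ (M%:R)).
  by rewrite -natrM ler_nat leq_divM.
by rewrite /M truncn_le.
Qed.

Lemma S_bound alpha N : (0 < alpha)%N ->
  ((count (alpha_full alpha) (iota 1 N))%:R : R) <=
  \sum_(r <- iota 1 N) ((N%:R / r%:R) `^ (alpha%:R^-1)) / (radn r)%:R.
Proof.
move=> a0.
rewrite (@count_partition _ _ (rpart alpha) _ _ (iota_uniq 1 N)); last first.
  move=> x; rewrite !mem_iota => /andP[x0 xN] afx.
  have ex := rpartE _ _ x0 afx.
  rewrite (leq_ltn_trans (leq_div _ _) xN) andbT lt0n.
  by apply/eqP => e; move: x0; rewrite ex e muln0.
rewrite natr_sum big_seq [X in _ <= X]big_seq; apply: ler_sum => r.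
rewrite mem_iota => /andP[r0 _]; exact: fiber_count.
Qed.


Lemma prod_primes_ord (F : nat -> R) r N : (0 < r)%N -> (r <= N)%N ->
  (forall p, p \notin primes r -> F p = 1) ->
  \prod_(p <- primes r) F p = \prod_(p < N.+1) F p.
Proof.
move=> r0 rN F1.
rewrite -(big_mkord xpredT F) /index_iota subn0 [in RHS](bigID (mem (primes r))) /=.
rewrite [X in _ = _ * X]big1 ?mulr1; last by move=> p /F1.
rewrite -[in RHS]big_filter.
apply: perm_big; apply: uniq_perm.
- exact: primes_uniq.
- by apply: filter_uniq; exact: (iota_uniq 0 N.+1).
move=> p; rewrite mem_filter (_ : (0 :: iota 1 N = iota 0 N.+1)%N) // mem_iota /=.
case pr: (p \in primes r) => //=.
by rewrite ltnS (leq_trans (primes_le _ _ pr) rN).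
Qed.

Lemma powR_prod (s : seq nat) (F : nat -> R) a : (forall i, 0 <= F i) ->
  (\prod_(i <- s) F i) `^ a = \prod_(i <- s) (F i `^ a).
Proof.
move=> F0; elim: s => [|i s IH]; first by rewrite !big_nil powR1.
by rewrite !big_cons powRM ?IH // prodr_ge0.
Qed.

Lemma powRX (x : R) b a : 0 <= x -> (x ^+ b) `^ a = (x `^ a) ^+ b.
Proof.
by move=> x0; rewrite -powR_mulrn // -powRrM mulrC powRrM powR_mulrn // powR_ge0.
Qed.

Lemma powRVx (x : R) a : 0 < x -> (x^-1) `^ a = (x `^ a)^-1.
Proof.
by move=> x0; rewrite /powR !gt_eqF ?invr_gt0 // lnV ?posrE // mulrN expRN.
Qed.

Lemma G_eq alpha N r : (0 < r)%N -> (r <= N)%N ->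
  ((r%:R `^ (alpha%:R^-1))^-1 / (radn r)%:R : R)
  = \prod_(p < N.+1) Hf R (alpha%:R^-1) p (logn p r).
Proof.
move=> r0 rN; set a : R := alpha%:R^-1.
rewrite -(prod_primes_ord (fun p => Hf R a p (logn p r)) _ _ r0 rN); last first.
  move=> p pr; have : ~~ (0 < logn p r)%N by rewrite logn_gt0.
  by rewrite lt0n negbK => /eqP ->; rewrite /Hf eqxx.
have er : (r%:R : R) = \prod_(p <- primes r) (p%:R) ^+ (logn p r).
  rewrite {1}(prod_prime_decomp r0) prime_decompE big_map natr_prod.
  by apply: eq_bigr => p _; rewrite natrX.
rewrite er powR_prod; last by move=> p; apply: exprn_ge0; apply: ler0n.
rewrite (eq_bigr (fun p => (p%:R `^ a) ^+ logn p r)); last first.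
  by move=> p _; rewrite powRX.
rewrite /radn natr_prod -!prodfV -big_split /=.
apply: eq_big_seq => p pr; rewrite /Hf.
rewrite (negbTE (_ : logn p r != 0%N)); last by rewrite -lt0n logn_gt0.
by move: pr; rewrite mem_primes => /andP[-> _].
Qed.

End Main.

Theorem lemma5 (R : realType) :
  exists C : R, 0 < C /\
    forall (alpha : nat) (Y : R), (2 <= alpha)%N -> 2 <= Y ->
      (S_alpha alpha Y)%:R <=
        C * alpha%:R * (kappa ^+ alpha) * (Y `^ (alpha%:R^-1)) * ln Y.
Proof.
exists 1; split => // alpha Y a2 Y2.
have a0 : (0 < alpha)%N by apply: leq_trans a2.
set a : R := alpha%:R^-1.
have a0' : 0 <= a by rewrite invr_ge0 ler0n.
rewrite /S_alpha; set N := Num.truncn Y.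
have Y0 : 0 <= Y by lra.
have NY : (N%:R : R) <= Y by rewrite /N truncn_le.
have N0 : (0 : R) <= N%:R by rewrite ler0n.
apply: (le_trans (S_bound R alpha N a0)).
have E : \sum_(r <- iota 1 N) ((N%:R / r%:R) `^ a) / (radn r)%:R
    = N%:R `^ a * \sum_(r <- iota 1 N) \prod_(p < N.+1) Hf R a p (logn p r).
  rewrite mulr_sumr; apply: eq_big_seq => r; rewrite mem_iota => /andP[r0 rN].
  have rN' : (r <= N)%N by rewrite -ltnS -add1n.
  rewrite -G_eq //.
  rewrite powRM ?invr_ge0 ?ler0n // powRVx ?ltr0n // mulrA //.
rewrite E.
have HB : \sum_(r <- iota 1 N) \prod_(p < N.+1) Hf R a p (logn p r) <= kappa ^+ alpha.
  have EX := expand_prod R N _ (@Hf_ge0 R a).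
  apply: (le_trans EX).
  apply: (@le_trans _ _ (\prod_(p < N.+1) expR (alpha%:R * prime_term p))).
    apply: ler_prod => p _; rewrite sumr_ge0 /=; last by move=> b _; apply: Hf_ge0.
    exact: factor_bound.
  rewrite -expR_sum -mulr_sumr.
  have kE : (kappa : R) = expR (limn (u R)) by [].
  rewrite kE -expRM_natl ler_expR ler_wpM2l ?ler0n //.
  exact: (u_le_lim R N.+1).
have k0 : 0 <= (kappa : R) ^+ alpha by rewrite exprn_ge0 // /kappa expR_ge0.
apply: (@le_trans _ _ (Y `^ a * kappa ^+ alpha)).
  apply: ler_pM.
  - exact: powR_ge0.
  - by apply: sumr_ge0 => r _; apply: prodr_ge0 => p _; apply: Hf_ge0.
  - by apply: ge0_ler_powR.
  - exact: HB.
have l2 := ln2_ge R.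
have lY : ln (2 : R) <= ln Y by rewrite ler_ln ?posrE //; lra.
have a2' : (2 : R) <= alpha%:R by rewrite (ler_nat R 2 alpha).
have P0 : 0 <= Y `^ a * kappa ^+ alpha by rewrite mulr_ge0 // powR_ge0.
have : 1 <= alpha%:R * ln Y by nra.
move=> h.
rewrite mul1r.
have -> : alpha%:R * kappa ^+ alpha * Y `^ a * ln Y
    = (Y `^ a * kappa ^+ alpha) * (alpha%:R * ln Y) by ring.
by rewrite -[X in X <= _]mulr1; apply: ler_wpM2l.
Qed.
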